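(* Let $R$ be a nonzero commutative ring which is not a field, let $n\ge2$, and let $K$ be a field. Then $\mathrm{St}^K_n(R)$ is not irreducible as a $\mathrm{GL}_n(R)$-representation.
   Context: A flag in $R^n$ is a chain $0\subsetneq V_1\subsetneq\cdots\subsetneq V_k\subsetneq R^n$ of free direct summands; complete if $k=n-1$, good if a subflag of a complete flag. The Tits complex $\mathcal{T}_n(R)$ has vertices the direct summands $V$ of $R^n$, $0\ne V\ne R^n$, with $V$ and $R^n/V$ free, and a $k$-simplex for every good flag with $k+1$ terms; $\mathrm{GL}_n(R)$ acts on it simplicially. $\mathrm{St}^K_n(R)=\tilde H_{n-2}(\mathcal{T}_n(R);K)$ with the induced $\mathrm{GL}_n(R)$-action. *)

(* Defs.v *)
From HB Require Import structures.
From mathcomp Require Import all_boot all_order all_algebra.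
From mathcomp Require Import boolp classical_sets.
Set Implicit Arguments. Unset Strict Implicit. Unset Printing Implicit Defensive.
Import GRing.Theory.
Local Open Scope classical_set_scope.
Local Open Scope ring_scope.

(* R^n is the module of row vectors 'rV[R]_n; submodules are classical sets
   of row vectors (equality of sets is extensional by boolp's axioms, and
   [set T] carries the classical eqType structure of boolp). *)

Section Tits.
Variables (R : comNzRingType) (n : nat).

Definition subm := set 'rV[R]_n.
Definition flag := seq subm.

Definition is_submod (V : subm) : Prop :=
  V 0 /\ (forall x y, V x -> V y -> V (x + y)) /\ (forall (a : R) x, V x -> V (a *: x)).

Definition is_free (V : subm) : Prop :=
  exists k (b : 'M[R]_(k, n)),
    (forall v, V v <-> exists u : 'rV[R]_k, v = u *m b) /\
    (forall u : 'rV[R]_k, u *m b = 0 -> u = 0).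

Definition is_dsummand (V : subm) : Prop :=
  is_submod V /\ exists W : subm, is_submod W /\
    (forall x, V x -> W x -> x = 0) /\
    (forall x, exists y z, V y /\ W z /\ x = y + z).

(* R^n / V is free: the images of the rows of some k x n matrix c form a
   basis of the quotient module R^n / V *)
Definition quot_free (V : subm) : Prop :=
  exists k (c : 'M[R]_(k, n)),
    (forall x, exists u : 'rV[R]_k, V (x - u *m c)) /\
    (forall u : 'rV[R]_k, V (u *m c) -> u = 0).

Definition free_dsummand (V : subm) : Prop := is_dsummand V /\ is_free V.

Definition tits_vertex (V : subm) : Prop :=
  is_dsummand V /\ is_free V /\ quot_free V /\ V <> [set 0] /\ V <> setT.

Definition strict_sub (V W : subm) : Prop := V `<=` W /\ V <> W.

Definition is_flag (s : flag) : Prop :=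
  (forall V, V \in s -> free_dsummand V) /\
  (forall i, (i.+1 < size s)%N -> strict_sub (nth set0 s i) (nth set0 s i.+1)) /\
  (forall V, V \in s -> strict_sub [set 0] V /\ strict_sub V setT).

Definition complete_flag (s : flag) : Prop := is_flag s /\ size s = n.-1.

Definition good_flag (s : flag) : Prop :=
  is_flag s /\ exists t, complete_flag t /\ subseq s t.

(* k-simplices: good flags with k+1 terms.  The empty flag is used as the
   unique (-1)-simplex, which yields the augmented (reduced) chain complex. *)
Definition simplex (d : nat) (s : flag) : Prop :=
  good_flag s /\ size s = d.+1.

Variable K : fieldType.

Definition chain (d : nat) (c : flag -> K) : Prop :=
  (exists s : seq flag, forall σ, c σ != 0 -> σ \in s) /\
  (forall σ, c σ != 0 -> simplex d σ).

Definition face (i : nat) (σ : flag) : flag := take i σ ++ drop i.+1 σ.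

Definition boundary_is (c f : flag -> K) : Prop :=
  exists s : seq flag, uniq s /\ (forall σ, c σ != 0 -> σ \in s) /\
    forall τ, f τ = \sum_(σ <- s) \sum_(i < size σ)
                      (if face i σ == τ then (-1) ^+ i * c σ else 0).

Definition cycle (d : nat) (f : flag -> K) : Prop :=
  chain d f /\ boundary_is f (fun _ => 0).
Definition bdry (d : nat) (f : flag -> K) : Prop :=
  exists c, chain d.+1 c /\ boundary_is c f.

(* GL_n(R), acting on R^n by v |-> v *m g *)
Definition GLn (g : 'M[R]_n) : Prop :=
  exists h : 'M[R]_n, g *m h = 1%:M /\ h *m g = 1%:M.

Definition act_flag (g : 'M[R]_n) (σ : flag) : flag :=
  map (fun V : subm => [set v *m g | v in V]) σ.

(* induced action on chains (f |-> f o g^{-1}); invariance under the whole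
   group is stated equivalently with f o g for all g in GL_n(R) *)
Definition invariant (W : set (flag -> K)) : Prop :=
  forall g f, GLn g -> W f -> W (fun σ => f (act_flag g σ)).

Definition ksubspace (W : set (flag -> K)) : Prop :=
  W (fun _ => 0) /\ (forall f h, W f -> W h -> W (fun σ => f σ + h σ)) /\
  (forall (a : K) f, W f -> W (fun σ => a * f σ)).

(* St^K_n(R) = H~_{n-2}(T_n(R); K) = Z_{n-2} / B_{n-2}.  It is irreducible
   as a GL_n(R)-representation iff it is nonzero and its only invariant
   subspaces are 0 and itself; subrepresentations of Z/B correspond to
   GL_n(R)-invariant K-subspaces W with B <= W <= Z. *)
Definition steinberg_irreducible : Prop :=
  (exists f, cycle n.-2 f /\ ~ bdry n.-2 f) /\
  forall W : set (flag -> K), ksubspace W -> invariant W ->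
    (forall f, bdry n.-2 f -> W f) -> (forall f, W f -> cycle n.-2 f) ->
    (forall f, W f -> bdry n.-2 f) \/ (forall f, cycle n.-2 f -> W f).

End Tits.

Definition not_field (R : comNzRingType) : Prop :=
  exists x : R, x != 0 /\ ~ exists y : R, x * y = 1.

(* Main.v *)
Require Import Defs.
From mathcomp Require Import all_boot all_order all_algebra all_fingroup zify.
From mathcomp Require Import boolp classical_sets.
Set Implicit Arguments. Unset Strict Implicit. Unset Printing Implicit Defensive.
Import GRing.Theory.
Local Open Scope classical_set_scope.
Local Open Scope ring_scope.

Section Gen.
Variables (K : fieldType).

Lemma big_indep (T : eqType) (G : T -> K) (s1 s2 : seq T) :
  uniq s1 -> uniq s2 -> (forall x, G x != 0 -> (x \in s1) && (x \in s2)) ->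
  \sum_(x <- s1) G x = \sum_(x <- s2) G x.
Proof.
move=> u1 u2 H.
have E (s t : seq T) : (forall x, G x != 0 -> x \in t) ->
   \sum_(x <- s) G x = \sum_(x <- [seq y <- s | y \in t]) G x.
  move=> Ht; rewrite big_filter (bigID (mem t)) /= [X in _ + X]big1 ?addr0 //.
  move=> x xt; apply/eqP; apply: contraNT xt => /Ht; done.
rewrite (E s1 s2); last by move=> x /H /andP[].
rewrite (E s2 s1); last by move=> x /H /andP[].
apply: perm_big; apply: uniq_perm; rewrite ?filter_uniq //.
by move=> x; rewrite !mem_filter andbC.
Qed.
End Gen.
Section Mat.
Variables (R : comNzRingType) (n : nat).
Implicit Types (V W : subm R n) (g h : 'M[R]_n) (σ : flag R n).

Definition pre h V : subm R n := [set y | V (y *m h)].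

Lemma img_comp V g1 g2 :
  [set w *m g2 | w in [set v *m g1 | v in V]] = [set v *m (g1 *m g2) | v in V].
Proof.
apply/seteqP; split => y /=.
  by case=> w [v Vv <-] <-; exists v => //; rewrite mulmxA.
by case=> v Vv <-; exists (v *m g1); [exists v|rewrite mulmxA].
Qed.

Lemma img1 V : [set v *m 1%:M | v in V] = V.
Proof.
apply/seteqP; split => y /=; first by case=> v Vv <-; rewrite mulmx1.
by move=> Vy; exists y => //; rewrite mulmx1.
Qed.

Lemma act_flagM g1 g2 σ : act_flag g2 (act_flag g1 σ) = act_flag (g1 *m g2) σ.
Proof. by rewrite /act_flag -map_comp; apply: eq_map => V /=; rewrite img_comp. Qed.

Lemma act_flag1 σ : act_flag 1%:M σ = σ.
Proof. by rewrite /act_flag (eq_map (@img1)) map_id. Qed.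

Variables (g h : 'M[R]_n).
Hypotheses (gh : g *m h = 1%:M) (hg : h *m g = 1%:M).

Lemma img_pre V : [set v *m g | v in V] = pre h V.
Proof.
apply/seteqP; split => y /=.
  by case=> v Vv <-; rewrite /pre /= -mulmxA gh mulmx1.
by move=> Vy; exists (y *m h) => //; rewrite -mulmxA hg mulmx1.
Qed.

Lemma act_pre σ : act_flag g σ = map (pre h) σ.
Proof. by apply: eq_map => V; rewrite img_pre. Qed.

Lemma act_flagK σ : act_flag h (act_flag g σ) = σ.
Proof. by rewrite act_flagM gh act_flag1. Qed.

Lemma act_flag_inj : injective (act_flag g).
Proof.
by move=> s t E; rewrite -(act_flagK s) -(act_flagK t) E.
Qed.

Lemma preK V : pre g (pre h V) = V.
Proof.
by apply/seteqP; split => y; rewrite /pre /= -mulmxA gh mulmx1.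
Qed.

Lemma pre_inj V W : pre h V = pre h W -> V = W.
Proof.
move=> E; have ->: V = pre g (pre h V).
  by apply/seteqP; split => y; rewrite /pre /= -mulmxA gh mulmx1.
rewrite E; apply/seteqP; split => y; rewrite /pre /= -mulmxA gh mulmx1 //.
Qed.

Lemma pre0 : pre h [set 0] = [set 0].
Proof.
apply/seteqP; split => y; rewrite /pre /=.
  by move=> E; rewrite -[y]mulmx1 -hg mulmxA E mul0mx.
by move=> ->; rewrite mul0mx.
Qed.

Lemma preT : pre h setT = setT.
Proof. by apply/seteqP; split => y. Qed.

Lemma pre_submod V : is_submod V -> is_submod (pre h V).
Proof.
case=> [V0 [VD VZ]]; split; first by rewrite /pre /= mul0mx.
split; first by move=> x y; rewrite /pre /= mulmxDl; apply: VD.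
by move=> a x; rewrite /pre /= -scalemxAl; apply: VZ.
Qed.

Lemma pre_free_dsummand V : free_dsummand V -> free_dsummand (pre h V).
Proof.
case=> [[sV [W [sW [cap sum]]]] [k [b [bV bi]]]]; split.
  split; first exact: pre_submod.
  exists (pre h W); split; first exact: pre_submod.
  split.
    move=> x Vx Wx; have := cap _ Vx Wx => E.
    by rewrite -[x]mulmx1 -hg mulmxA E mul0mx.
  move=> x; case: (sum (x *m h)) => y [z [Vy [Wz E]]].
  exists (y *m g), (z *m g); rewrite /pre /= -!mulmxA !gh !mulmx1.
  by split => //; split => //; rewrite -mulmxDl -E -mulmxA hg mulmx1.
exists k, (b *m g); split.
  move=> v; rewrite /pre /= bV; split; case=> u E; exists u.
    by rewrite mulmxA -E -mulmxA hg mulmx1.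
  by rewrite E -!mulmxA gh mulmx1.
move=> u E; apply: bi.
by rewrite -[u *m b]mulmx1 -gh mulmxA -(mulmxA u) E mul0mx.
Qed.

Lemma pre_sub V W : V `<=` W -> pre h V `<=` pre h W.
Proof. by move=> S y; rewrite /pre /=; apply: S. Qed.

Lemma pre_strict V W : strict_sub V W -> strict_sub (pre h V) (pre h W).
Proof. by case=> S N; split; [apply: pre_sub|move/pre_inj]. Qed.

Lemma act_is_flag σ : is_flag σ -> is_flag (act_flag g σ).
Proof.
rewrite act_pre; case=> [F [S B]]; split.
  by move=> V /mapP[V0 /F H ->]; apply: pre_free_dsummand.
split.
  move=> i; rewrite size_map => lt.
  rewrite !(nth_map set0) //; last exact: ltnW.
  exact: pre_strict (S _ lt).
move=> V /mapP[V0 /B [H1 H2] ->]; rewrite -pre0 -preT.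
by split; apply: pre_strict.
Qed.

Lemma act_good σ : good_flag σ -> good_flag (act_flag g σ).
Proof.
case=> [F [t [[Ft st] sub]]]; split; first exact: act_is_flag.
exists (act_flag g t); split; first by split; [apply: act_is_flag|rewrite size_map].
exact: map_subseq.
Qed.

Lemma act_simplex d σ : simplex d σ -> simplex d (act_flag g σ).
Proof. by case=> G S; split; [apply: act_good|rewrite size_map]. Qed.

End Mat.

Section Chains.
Variables (R : comNzRingType) (n : nat) (K : fieldType).
Implicit Types (σ τ : flag R n) (f c : flag R n -> K).

Definition bsum (s : seq (flag R n)) c τ :=
  \sum_(σ <- s) \sum_(i < size σ) (if face i σ == τ then (-1) ^+ i * c σ else 0).

Lemma bsumE s c τ : bsum s c τ =
  \sum_(σ <- s) \sum_(0 <= i < size σ) (if face i σ == τ then (-1) ^+ i * c σ else 0).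
Proof. by apply: eq_bigr => σ _; rewrite big_mkord. Qed.

Lemma bsum_indep s1 s2 c τ : uniq s1 -> uniq s2 ->
  (forall σ, c σ != 0 -> (σ \in s1) && (σ \in s2)) -> bsum s1 c τ = bsum s2 c τ.
Proof.
move=> u1 u2 H; apply: big_indep => // σ nz; apply: H; apply: contraNneq nz => ->.
by rewrite big1 // => i _; rewrite mulr0 if_same.
Qed.

Lemma bsumD s c1 c2 τ : bsum s (fun σ => c1 σ + c2 σ) τ = bsum s c1 τ + bsum s c2 τ.
Proof.
rewrite /bsum -big_split; apply: eq_bigr => σ _; rewrite -big_split.
by apply: eq_bigr => i _; case: (face i σ == τ); rewrite /= ?mulrDr ?addr0.
Qed.

Lemma bsumZ s a c τ : bsum s (fun σ => a * c σ) τ = a * bsum s c τ.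
Proof.
rewrite /bsum mulr_sumr; apply: eq_bigr => σ _; rewrite mulr_sumr.
by apply: eq_bigr => i _; case: ifP; rewrite ?mulr0 // mulrCA.
Qed.

Lemma cycle0 d : Defs.cycle d (fun _ : flag R n => (0:K)).
Proof.
split; first by split; [exists [::]|] => σ; rewrite eqxx.
by exists [::]; split => //; split => [τ|τ]; rewrite ?eqxx // big_nil.
Qed.

Lemma cycle_cover d f : Defs.cycle d f ->
  exists s, uniq s /\ (forall σ, f σ != 0 -> σ \in s) /\ forall τ, bsum s f τ = 0.
Proof. by case=> _ [s [u [cv E]]]; exists s; split => //; split => // τ; rewrite /bsum -E. Qed.

Lemma cycleD d f1 f2 : Defs.cycle d f1 -> Defs.cycle d f2 ->
  Defs.cycle d (fun σ => f1 σ + f2 σ).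
Proof.
move=> C1 C2; have [s1 [u1 [cv1 E1]]] := cycle_cover C1.
have [s2 [u2 [cv2 E2]]] := cycle_cover C2.
case: C1 => [[_ S1] _]; case: C2 => [[_ S2] _].
have cv σ : f1 σ + f2 σ != 0 -> σ \in undup (s1 ++ s2).
  move=> nz; rewrite mem_undup mem_cat.
  by case: (eqVneq (f1 σ) 0) nz => [->|/cv1->//]; rewrite add0r => /cv2->; rewrite orbT.
split; first split.
- by exists (undup (s1 ++ s2)).
- move=> σ nz; case: (eqVneq (f1 σ) 0) nz => [->|/S1//]; rewrite add0r; exact: S2.
exists (undup (s1 ++ s2)); split; first exact: undup_uniq.
split => // τ; symmetry; change (bsum (undup (s1 ++ s2)) (fun σ => f1 σ + f2 σ) τ = 0); rewrite bsumD.
rewrite (bsum_indep (s1:=undup (s1 ++ s2)) (s2:=s1) (c:=f1)) ?undup_uniq //; last first.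
  by move=> σ /cv1 H; rewrite mem_undup mem_cat H.
rewrite (bsum_indep (s1:=undup (s1 ++ s2)) (s2:=s2) (c:=f2)) ?undup_uniq //; last first.
  by move=> σ /cv2 H; rewrite mem_undup mem_cat H orbT.
by rewrite E1 E2 addr0.
Qed.

Lemma cycleZ d a f : Defs.cycle d f -> Defs.cycle d (fun σ => a * f σ).
Proof.
move=> C; have [s [u [cv E]]] := cycle_cover C; case: C => [[_ S] _].
have cv' σ : a * f σ != 0 -> σ \in s.
  by move=> nz; apply: cv; apply: contraNneq nz => ->; rewrite mulr0.
split; first split.
- by exists s.
- by move=> σ nz; apply: S; apply: contraNneq nz => ->; rewrite mulr0.
exists s; split => //; split => // τ.
by symmetry; change (bsum s (fun σ => a * f σ) τ = 0); rewrite bsumZ E mulr0.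
Qed.

End Chains.

Lemma face_map (T U : Type) (φ : T -> U) i (s : seq T) :
  take i (map φ s) ++ drop i.+1 (map φ s) = map φ (take i s ++ drop i.+1 s).
Proof. by rewrite map_cat map_take map_drop. Qed.

Section Act.
Variables (R : comNzRingType) (n : nat) (K : fieldType).
Implicit Types (σ τ : flag R n) (f c : flag R n -> K).

Lemma bsum_act (g h : 'M[R]_n) s f τ : g *m h = 1%:M -> h *m g = 1%:M ->
  bsum (map (act_flag h) s) (fun σ => f (act_flag g σ)) τ = bsum s f (act_flag g τ).
Proof.
move=> gh hg; rewrite !bsumE big_map; apply: eq_bigr => ρ _.
have -> : size (act_flag h ρ) = size ρ by rewrite size_map.
apply: eq_bigr => i _.
rewrite (act_flagK hg) //.
have -> : (face i (act_flag h ρ) == τ) = (face i ρ == act_flag g τ).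
  have -> : face i (act_flag h ρ) = act_flag h (face i ρ) by rewrite /face face_map.
  apply/eqP/eqP => [<-|->]; first by rewrite (act_flagK hg).
  by rewrite (act_flagK gh).
by [].
Qed.

Lemma cycle_act d f g : GLn g -> Defs.cycle d f -> Defs.cycle d (fun σ => f (act_flag g σ)).
Proof.
case=> h [gh hg] C; have [s [u [cv E]]] := cycle_cover C; case: C => [[_ S] _].
have cv' σ : f (act_flag g σ) != 0 -> σ \in map (act_flag h) s.
  by move=> /cv H; apply/mapP; exists (act_flag g σ) => //; rewrite (act_flagK gh).
split; first split.
- by exists (map (act_flag h) s).
- move=> σ /S H; rewrite -(act_flagK gh σ); exact: (act_simplex hg gh H).
exists (map (act_flag h) s); split.
  by rewrite map_inj_uniq //; apply: (act_flag_inj hg).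
split => // τ; symmetry.
change (bsum (map (act_flag h) s) (fun σ => f (act_flag g σ)) τ = 0).
by rewrite (bsum_act _ _ _ gh hg) E.
Qed.

End Act.

Section Coord.
Variables (R : comNzRingType) (N : nat).
Implicit Types (P Q : pred 'I_N).

Definition coordsub P : subm R N := [set v | forall j, ~~ P j -> v 0 j = 0].
Definition ev (j : 'I_N) : 'rV[R]_N := delta_mx 0 j.

Lemma evE j k : ev j 0 k = (j == k)%:R.
Proof. by rewrite /ev mxE eqxx eq_sym. Qed.

Lemma ev_mul j (A : 'M[R]_N) k : (ev j *m A) 0 k = A j k.
Proof.
rewrite mxE (bigD1 j) //= evE eqxx mul1r big1 ?addr0 // => i /negbTE ij.
by rewrite evE eq_sym ij mul0r.
Qed.

Lemma ev_in j P : coordsub P (ev j) <-> P j.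
Proof.
split => [H|Pj k nPk]; last by rewrite evE; case: eqP => // E; move: nPk; rewrite -E Pj.
apply/negPn/negP => /H; rewrite evE eqxx; apply/eqP; exact: oner_neq0.
Qed.

Lemma coordsub_sub P Q : {subset P <= Q} -> coordsub P `<=` coordsub Q.
Proof. by move=> S v H j nQ; apply: H; apply: contra nQ; apply: S. Qed.

Lemma coordsub_eq P Q : coordsub P = coordsub Q -> P =1 Q.
Proof.
move=> E j; apply/idP/idP => H.
  by have := (ev_in j P).2 H; rewrite E => /ev_in.
by have := (ev_in j Q).2 H; rewrite -E => /ev_in.
Qed.

Lemma coordsub_strict P Q j : {subset P <= Q} -> Q j -> ~~ P j ->
  strict_sub (coordsub P) (coordsub Q).
Proof. by move=> S Qj nPj; split; [apply: coordsub_sub|move/coordsub_eq/(_ j); rewrite Qj (negbTE nPj)]. Qed.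

Lemma coordsub0 : coordsub pred0 = [set 0].
Proof.
apply/seteqP; split => v /=.
  by move=> H; apply/rowP => j; rewrite mxE; apply: H.
by move=> -> j _; rewrite mxE.
Qed.

Lemma coordsubT : coordsub predT = setT.
Proof. by apply/seteqP; split => v //= _ j. Qed.

Lemma coordsub_submod P : is_submod (coordsub P).
Proof.
split; first by move=> j _; rewrite mxE.
split; first by move=> x y Hx Hy j nP; rewrite mxE Hx ?Hy ?addr0.
by move=> a x Hx j nP; rewrite mxE Hx ?mulr0.
Qed.

Lemma coordsub_free P : free_dsummand (coordsub P).
Proof.
split.
  split; first exact: coordsub_submod.
  exists (coordsub (predC P)); split; first exact: coordsub_submod.
  split.
    move=> x Hx Hy; apply/rowP => j; rewrite mxE.
    by case: (boolP (P j)) => Pj; [apply: Hy; rewrite /= Pj|apply: Hx].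
  move=> x; exists (\row_j (if P j then x 0 j else 0)), (\row_j (if P j then 0 else x 0 j)).
  split; first by move=> j /negbTE nP; rewrite mxE nP.
  split; first by move=> j /=; rewrite negbK mxE => ->.
  by apply/rowP => j; rewrite !mxE; case: (P j); rewrite ?addr0 ?add0r.
pose b : 'M[R]_(#|P|, N) := \matrix_(i, j) ((@enum_val _ P i == j)%:R).
have mulb (u : 'rV[R]_#|P|) j : (u *m b) 0 j = \sum_(i | enum_val i == j) u 0 i.
  rewrite mxE [RHS]big_mkcond /=; apply: eq_bigr => i _; rewrite mxE.
  by case: (enum_val i == j); rewrite ?mulr1 ?mulr0.
have mulb_val (u : 'rV[R]_#|P|) i : (u *m b) 0 (enum_val i) = u 0 i.
  rewrite mulb (big_pred1 i) // => i'; apply/eqP/eqP => [/enum_val_inj|->] //.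
have mulb_out (u : 'rV[R]_#|P|) j : ~~ P j -> (u *m b) 0 j = 0.
  move=> nP; rewrite mulb big_pred0 // => i; apply/negbTE; apply: contraNneq nP => <-.
  exact: enum_valP.
exists #|P|, b; split.
  move=> v; split.
    move=> Hv; exists (\row_i v 0 (enum_val i)); apply/rowP => j.
    case: (boolP (P j)) => Pj; last by rewrite mulb_out // Hv.
    by rewrite -(enum_rankK_in Pj Pj) mulb_val mxE.
  by case=> u -> j nP; rewrite mulb_out.
move=> u E; apply/rowP => i; rewrite -mulb_val E !mxE //.
Qed.

End Coord.

Lemma face_eq (T : Type) (x0 : T) (s s' : seq T) i :
  size s = size s' -> (forall k, k != i -> nth x0 s k = nth x0 s' k) ->
  take i s ++ drop i.+1 s = take i s' ++ drop i.+1 s'.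
Proof.
move=> Es H; congr (_ ++ _).
  apply: (@eq_from_nth _ x0); first by rewrite !size_take Es.
  move=> k; rewrite size_take => lt.
  have ki : (k < i)%N by move: lt; case: ifP => H1; lia.
  rewrite !nth_take //; apply: H; rewrite neq_ltn ki //.
apply: (@eq_from_nth _ x0); first by rewrite !size_drop Es.
move=> k _; rewrite !nth_drop; apply: H; lia.
Qed.

Section Apt.
Variables (R : comNzRingType) (m : nat) (K : fieldType).
Local Notation N := m.+2.
Implicit Types (w : {perm 'I_N}).

Definition lvl w k : pred 'I_N := fun j => (w j < k)%N.
Definition Fl w : flag R N := mkseq (fun k => @coordsub R N (lvl w k.+1)) m.+1.

Lemma size_Fl w : size (Fl w) = m.+1.
Proof. by rewrite size_mkseq. Qed.

Lemma nth_Fl w k : (k < m.+1)%N -> nth set0 (Fl w) k = @coordsub R N (lvl w k.+1).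
Proof. by move=> lt; rewrite nth_mkseq. Qed.

Lemma perm_witness w k : (k < N)%N -> exists j, val (w j) = k.
Proof.
move=> lt; exists ((w^-1)%g (Ordinal lt)); by rewrite permKV.
Qed.

Lemma Fl_flag w : is_flag (Fl w).
Proof.
split.
  move=> V /mapP [k]; rewrite mem_iota => /andP[_ lt] ->.
  exact: coordsub_free.
split.
  move=> i; rewrite size_Fl => lt; rewrite !nth_Fl //; last exact: ltnW.
  have [j Ej] := perm_witness w (ltnW lt : (i.+1 < N)%N).
  apply: (@coordsub_strict R N _ _ j).
  - by move=> l; rewrite /lvl /= => /ltn_trans; apply.
  - by rewrite /lvl /= Ej.
  - by rewrite /lvl /= Ej ltnn.
move=> V /mapP [k]; rewrite mem_iota => /andP[_ lt] ->.
split.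
  rewrite -coordsub0.
  have [j Ej] := perm_witness w (isT : (0 < N)%N).
  apply: (@coordsub_strict R N _ _ j) => //.
  by rewrite /lvl /= Ej.
rewrite -coordsubT.
have [j Ej] := perm_witness w (ltnSn _ : (m.+1 < N)%N).
apply: (@coordsub_strict R N _ _ j) => //.
by rewrite /lvl /= Ej -ltnS -leqNgt.
Qed.

Lemma Fl_simplex w : simplex m (Fl w).
Proof.
split; last exact: size_Fl.
split; first exact: Fl_flag.
by exists (Fl w); split => //; split; [apply: Fl_flag|rewrite size_Fl].
Qed.

Lemma lvl_inj w w' : (forall k, (k < m.+1)%N -> lvl w k.+1 =1 lvl w' k.+1) -> w = w'.
Proof.
move=> H; apply/permP => j; apply: val_inj => /=.
have B (a b : {perm 'I_N}) : (forall k, (k < m.+1)%N -> lvl a k.+1 =1 lvl b k.+1) ->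
    (b j <= a j)%N.
  move=> Hab; case: (ltnP (a j) m.+1) => [lt|ge].
    by have := Hab _ lt j; rewrite /lvl /= ltnSn => /esym; rewrite ltnS.
  by rewrite -ltnS (leq_trans (ltn_ord _)) // ltnS.
by apply/eqP; rewrite eqn_leq !B // => k lt l; rewrite H.
Qed.

Lemma Fl_inj w w' : Fl w = Fl w' -> w = w'.
Proof.
move=> E; apply: lvl_inj => k lt; apply: (@coordsub_eq R).
by rewrite -!nth_Fl // E.
Qed.

End Apt.

Section Apt2.
Variables (R : comNzRingType) (m : nat) (K : fieldType).
Local Notation N := m.+2.
Implicit Types (w : {perm 'I_N}).

Definition sgn w : K := (-1) ^+ odd_perm w.

Definition apt (σ : flag R N) : K :=
  \sum_(w : {perm 'I_N}) (if σ == Fl R w then sgn w else 0).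

Lemma aptE w : apt (Fl R w) = sgn w.
Proof.
rewrite /apt (bigD1 w) //= eqxx big1 ?addr0 // => w' nw.
by case: eqP => // /Fl_inj E; rewrite E eqxx in nw.
Qed.

Lemma apt_supp σ : apt σ != 0 -> exists w, σ = Fl R w.
Proof.
move=> nz; case: (pselect (exists w, σ = Fl R w)) => // H; exfalso.
move/eqP: nz; apply; apply: big1 => w _; case: eqP => // E; exfalso.
by apply: H; exists w.
Qed.

Lemma lvl_t w i k : (i < m.+1)%N -> k != i ->
  lvl (w * tperm (inord i : 'I_N) (inord i.+1))%g k.+1 =1 lvl w k.+1.
Proof.
move=> lt ki j; rewrite /lvl /= permM.
case: tpermP => [E|E|//]; rewrite E !inordK //; apply/idP/idP; lia.
Qed.

Lemma face_t w i : (i < m.+1)%N ->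
  face i (Fl R (w * tperm (inord i : 'I_N) (inord i.+1))%g) = face i (Fl R w).
Proof.
move=> lt; rewrite /face; apply: (@face_eq _ set0); first by rewrite !size_Fl.
move=> k ki; case: (ltnP k m.+1) => kl.
  by rewrite !nth_Fl //; congr coordsub; apply: funext => j; rewrite lvl_t.
by rewrite !nth_default // size_Fl.
Qed.

Lemma tneq i : (i < m.+1)%N -> (inord i : 'I_N) != inord i.+1.
Proof. by move=> lt; apply/eqP => /(congr1 val); rewrite /= !inordK //; lia. Qed.

Lemma sgn_t w i : (i < m.+1)%N -> sgn (w * tperm (inord i : 'I_N) (inord i.+1))%g = - sgn w.
Proof.
move=> lt; rewrite /sgn odd_permM odd_tperm.
by rewrite tneq // addbT; case: (odd_perm w); rewrite /= ?expr0 ?expr1 ?opprK.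
Qed.

Lemma apt_cycle : Defs.cycle m apt.
Proof.
have cv σ : apt σ != 0 -> σ \in map (@Fl R m) (index_enum {perm 'I_N}).
  by move/apt_supp => [w ->]; apply: map_f; rewrite mem_index_enum.
split; first split.
- by exists (map (@Fl R m) (index_enum {perm 'I_N})).
- by move=> σ /apt_supp [w ->]; apply: Fl_simplex.
exists (map (@Fl R m) (index_enum {perm 'I_N})); split.
  by rewrite map_inj_uniq ?index_enum_uniq //; apply: Fl_inj.
split => // τ; symmetry.
change (bsum (map (@Fl R m) (index_enum {perm 'I_N})) apt τ = 0).
rewrite bsumE big_map.
under eq_bigr => w _ do rewrite size_Fl aptE.
rewrite exchange_big /=; apply: big1_seq => i /andP[_]; rewrite mem_index_iota => /andP[_ lt].
set t := tperm (inord i : 'I_N) (inord i.+1).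
set G := fun w => if face i (Fl R w) == τ then (-1) ^+ i * sgn w else 0.
have Gt w : G (w * t)%g = - G w.
  rewrite /G face_t //; case: ifP => _; rewrite ?oppr0 // sgn_t //; by rewrite mulrN.
rewrite -/(\sum_(w <- index_enum _) G w) (bigID (fun w => odd_perm w)) /=.
rewrite (reindex_inj (mulIg t)) /=.
rewrite (eq_big (fun w => ~~ odd_perm w) (fun w => - G w)); last 2 first.
- by move=> w; rewrite odd_permM odd_tperm tneq // addbT.
- by move=> w _; rewrite Gt.
by rewrite sumrN addNr.
Qed.
End Apt2.

Section Gam.
Variables (R : comNzRingType) (n : nat) (x : R).
Hypothesis xnu : ~ exists y, x * y = 1.
Implicit Types (σ τ ρ : flag R n) (a b γ g h M : 'M[R]_n).

Definition inG γ := GLn γ /\ exists M, γ = 1%:M + x *: M.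
Definition sim σ τ := exists γ, inG γ /\ τ = act_flag γ σ.

Lemma GLnM a b : GLn a -> GLn b -> GLn (a *m b).
Proof.
case=> [a' [aa a'a]] [b' [bb b'b]]; exists (b' *m a'); split.
  by rewrite mulmxA -(mulmxA a) bb mulmx1 aa.
by rewrite mulmxA -(mulmxA b') a'a mulmx1 b'b.
Qed.

Lemma inG1 : inG 1%:M.
Proof. by split; [exists 1%:M; rewrite mulmx1|exists 0; rewrite scaler0 addr0]. Qed.

Lemma inGM a b : inG a -> inG b -> inG (a *m b).
Proof.
rewrite /inG => -[Ga [A EA]] -[Gb [B EB]]; split; first exact: GLnM.
exists (A + B + x *: (A *m B)); rewrite EA EB.
rewrite mulmxDl !mulmxDr !mul1mx !mulmx1 -!scalemxAl -!scalemxAr scalerA !scalerDr scalerA.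
by rewrite !addrA; congr (_ + _); rewrite -!addrA; congr (_ + _); rewrite addrC.
Qed.

Lemma inGV γ : inG γ -> exists γ', inG γ' /\ γ *m γ' = 1%:M /\ γ' *m γ = 1%:M.
Proof.
rewrite /inG => -[[h [gh hg]] [M EM]]; exists h; split; last by [].
split; first by exists γ.
exists (- (h *m M)).
have : h *m γ = h + x *: (h *m M) by rewrite EM mulmxDr mulmx1 scalemxAr.
by rewrite hg => ->; rewrite scalerN addrK.
Qed.

Lemma inG_conj g h γ : g *m h = 1%:M -> h *m g = 1%:M -> inG γ -> inG (h *m γ *m g).
Proof.
rewrite /inG => gh hg -[Gγ [M EM]]; split.
  by apply: GLnM; [apply: GLnM => //; exists g|exists h].
exists (h *m M *m g); rewrite EM mulmxDr mulmx1 mulmxDl hg -scalemxAr -scalemxAl.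
by [].
Qed.

Lemma sim_refl σ : sim σ σ.
Proof. by exists 1%:M; split; [apply: inG1|rewrite act_flag1]. Qed.

Lemma sim_sym σ τ : sim σ τ -> sim τ σ.
Proof.
case=> γ [Gγ ->]; have [γ' [G' [e1 e2]]] := inGV Gγ.
by exists γ'; split => //; rewrite act_flagM e1 act_flag1.
Qed.

Lemma sim_trans σ τ ρ : sim σ τ -> sim τ ρ -> sim σ ρ.
Proof.
case=> a [Ga ->] [b [Gb ->]]; exists (a *m b); split; last by rewrite act_flagM.
exact: inGM.
Qed.

Lemma sim_act g h σ τ : g *m h = 1%:M -> h *m g = 1%:M ->
  sim σ τ -> sim (act_flag g σ) (act_flag g τ).
Proof.
move=> gh hg [γ [Gγ ->]]; exists (h *m γ *m g); split; first exact: inG_conj.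
by rewrite !act_flagM; congr act_flag; rewrite !mulmxA gh mul1mx.
Qed.

Lemma sim_actE g h σ τ : g *m h = 1%:M -> h *m g = 1%:M ->
  sim (act_flag h σ) τ <-> sim σ (act_flag g τ).
Proof.
move=> gh hg; split => H.
  by have := sim_act gh hg H; rewrite (act_flagK hg).
by have := sim_act hg gh H; rewrite (act_flagK gh).
Qed.

Lemma img_coord_sub γ (P Q : pred 'I_n) : inG γ ->
  [set v *m γ | v in @coordsub R n P] = coordsub Q -> {subset P <= Q}.
Proof.
rewrite /inG => -[_ [M EM]] E j Pj.
have : coordsub Q (ev R j *m γ) by rewrite -E; exists (ev R j) => //; apply/ev_in.
move=> H; apply/negPn/negP => /H; rewrite ev_mul EM !mxE eqxx /= mulr1n => E0.
apply: xnu; exists (- M j j); rewrite mulrN; apply/eqP.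
by rewrite eqr_oppLR -addr_eq0 addrC E0.
Qed.

End Gam.

Section Main.
Variables (R : comNzRingType) (m : nat) (K : fieldType) (x : R).
Hypothesis xnu : ~ exists y, x * y = 1.
Local Notation N := m.+2.
Implicit Types (σ τ ρ : flag R N) (f : flag R N -> K).

Definition csum (s : seq (flag R N)) f τ := \sum_(σ <- s | `[< sim x σ τ >]) f σ.

Definition Wset : set (flag R N -> K) := fun f =>
  Defs.cycle m f /\ forall τ s, uniq s -> (forall σ, f σ != 0 -> σ \in s) -> csum s f τ = 0.

Lemma csum_indep s1 s2 f τ : uniq s1 -> uniq s2 ->
  (forall σ, f σ != 0 -> (σ \in s1) && (σ \in s2)) -> csum s1 f τ = csum s2 f τ.
Proof.
move=> u1 u2 H; rewrite /csum big_mkcond [RHS]big_mkcond; apply: big_indep => // σ.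
by case: ifP => _; [apply: H|rewrite eqxx].
Qed.

Lemma csum_act g h s f τ : g *m h = 1%:M -> h *m g = 1%:M ->
  csum s (fun σ => f (act_flag g σ)) τ = csum (map (act_flag g) s) f (act_flag g τ).
Proof.
move=> gh hg; rewrite /csum big_map; apply: eq_bigl => σ.
apply: asbool_equiv_eq; split => H; first exact: (sim_act gh hg H).
by have := sim_act hg gh H; rewrite !(act_flagK gh).
Qed.

Lemma W_ksub : ksubspace Wset.
Proof.
split.
  split; first exact: cycle0.
  by move=> τ s _ _; rewrite /csum big1.
split.
  move=> f g [Cf Hf] [Cg Hg]; split; first exact: cycleD.
  move=> τ s us cs.
  have [sf [uf [cf _]]] := cycle_cover Cf; have [sg [ug [cg _]]] := cycle_cover Cg.
  set s0 := undup (s ++ sf ++ sg).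
  rewrite (csum_indep (s2:=s0)) ?undup_uniq //; last first.
    by move=> σ /cs H; rewrite mem_undup !mem_cat H.
  rewrite /csum big_split /= -!/(csum _ _ _).
  rewrite Hf ?Hg ?addr0 ?undup_uniq // => σ.
    by move/cg => H; rewrite mem_undup !mem_cat H !orbT.
  by move/cf => H; rewrite mem_undup !mem_cat H !orbT.
move=> a f [Cf Hf]; split; first exact: cycleZ.
move=> τ s us cs; have [sf [uf [cf _]]] := cycle_cover Cf.
set s0 := undup (s ++ sf).
rewrite (csum_indep (s2:=s0)) ?undup_uniq //; last first.
  by move=> σ /cs H; rewrite mem_undup !mem_cat H.
rewrite /csum -mulr_sumr -/(csum _ _ _) Hf ?mulr0 ?undup_uniq // => σ.
by move/cf => H; rewrite mem_undup !mem_cat H !orbT.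
Qed.

Lemma W_inv : Defs.invariant Wset.
Proof.
move=> g f Gg [Cf Hf]; split; first exact: cycle_act.
move=> τ s us cs; case: Gg => h [gh hg].
rewrite (csum_act _ _ _ gh hg); apply: Hf.
  by rewrite map_inj_uniq //; apply: (act_flag_inj gh).
move=> ρ nz; apply/mapP; exists (act_flag h ρ); last by rewrite (act_flagK hg).
by apply: cs; rewrite (act_flagK hg).
Qed.

End Main.

Section Main2.
Variables (R : comNzRingType) (m : nat) (K : fieldType) (x : R).
Hypothesis xnz : x != 0.
Hypothesis xnu : ~ exists y, x * y = 1.
Local Notation N := m.+2.
Implicit Types (σ τ ρ : flag R N) (f : flag R N -> K) (w : {perm 'I_N}).

Lemma bdry_zero f : bdry m f -> f = (fun _ => 0).
Proof.
case=> c [[_ S] [s [_ [_ E]]]]; apply: funext => τ; rewrite E.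
apply: big1 => σ _.
case: (eqVneq (c σ) 0) => [->|/S [[_ [t [[_ St] sub]]] Sz]].
  by apply: big1 => i _; rewrite mulr0 if_same.
by have := size_subseq sub; rewrite Sz St ltnn.
Qed.

Lemma W_bdry f : bdry m f -> Wset x f.
Proof. by move/bdry_zero ->; case: (W_ksub m K x). Qed.

Lemma sim_Fl_sub w w' : sim x (Fl R w) (Fl R w') ->
  forall k, (k < m.+1)%N -> {subset lvl w k.+1 <= lvl w' k.+1}.
Proof.
case=> γ [Gγ E] k lt; apply: (img_coord_sub xnu Gγ).
by rewrite -!nth_Fl // E /act_flag (nth_map set0) // size_Fl.
Qed.

Lemma sim_Fl w w' : sim x (Fl R w) (Fl R w') -> w = w'.
Proof.
move=> H; have H' := sim_sym H; apply: lvl_inj => k lt j.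
by apply/idP/idP; [apply: (sim_Fl_sub H)|apply: (sim_Fl_sub H')].
Qed.


Definition i1 : 'I_N := inord 1.

Lemma i1_neq : i1 != ord0.
Proof. by apply/eqP => /(congr1 val); rewrite /= inordK. Qed.

Definition h0 : 'M[R]_N := 1%:M + x *: delta_mx ord0 i1.
Definition h0' : 'M[R]_N := 1%:M - x *: delta_mx ord0 i1.

Lemma dd0 : delta_mx ord0 i1 *m delta_mx ord0 i1 = 0 :> 'M[R]_N.
Proof. by apply: mul_delta_mx_0; apply: i1_neq. Qed.

Lemma h0h0' : h0 *m h0' = 1%:M.
Proof.
rewrite /h0 /h0' mulmxDl mulmxBr !mul1mx mulmxBr mulmx1 -!scalemxAl -scalemxAr dd0.
by rewrite !scaler0 subr0 subrK.
Qed.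

Lemma h0'h0 : h0' *m h0 = 1%:M.
Proof.
rewrite /h0 /h0' mulmxBl !mulmxDr !mul1mx mulmx1 -!scalemxAl -scalemxAr dd0.
by rewrite !scaler0 addr0 addrK.
Qed.

Lemma inG_h0 : inG x h0.
Proof. by split; [exists h0'; split; [apply: h0h0'|apply: h0'h0]|exists (delta_mx ord0 i1)]. Qed.

Lemma h0_entry j : (ev R ord0 *m h0) 0 j = (ord0 == j)%:R + x * (i1 == j)%:R.
Proof. by rewrite ev_mul !mxE eqxx /= [j == _]eq_sym. Qed.

Lemma apt_act0 : apt K (act_flag h0 (Fl R 1%g)) = 0.
Proof.
apply: big1 => w _; case: eqP => // E; exfalso.
have E0 := congr1 (fun s => nth set0 s 0) E; move: E0 => /=.
move=> E0.
have Hv : coordsub (lvl w 1) (ev R ord0 *m h0).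
  by rewrite -E0; exists (ev R ord0) => //; apply/ev_in; rewrite /lvl /= perm1.
have L j : (ev R ord0 *m h0) 0 j != 0 -> lvl w 1 j.
  by move=> nz; apply/negPn/negP => /Hv; apply/eqP.
have a : lvl w 1 ord0.
  by apply: L; rewrite h0_entry eqxx (negbTE i1_neq) mulr0 addr0 oner_neq0.
have b : lvl w 1 i1.
  by apply: L; rewrite h0_entry [ord0 == _]eq_sym (negbTE i1_neq) eqxx mulr1 add0r.
move: a b; rewrite /lvl /= !ltnS !leqn0 => a b.
have : w ord0 = w i1 by apply: val_inj; rewrite /= (eqP a) (eqP b).
by move/perm_inj => E1; move: i1_neq; rewrite E1 eqxx.
Qed.

Definition dd (σ : flag R N) : K := apt K σ + (-1) * apt K (act_flag h0 σ).

Lemma dd_F1 : dd (Fl R 1%g) = 1.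
Proof. by rewrite /dd apt_act0 mulr0 addr0 aptE /sgn odd_perm1. Qed.

Lemma sim_h0 τ : sim x τ (act_flag h0 τ).
Proof. by exists h0; split => //; apply: inG_h0. Qed.

Lemma dd_W : Wset x dd.
Proof.
split.
  apply: cycleD; first exact: apt_cycle.
  apply: cycleZ; apply: cycle_act; last exact: apt_cycle.
  by exists h0'; split; [apply: h0h0'|apply: h0'h0].
move=> τ s us cs.
set sc := map (@Fl R m) (index_enum {perm 'I_N}).
have csc σ : apt K σ != 0 -> σ \in sc.
  by move/apt_supp => [w ->]; apply: map_f; rewrite mem_index_enum.
set s0 := undup (s ++ sc ++ map (act_flag h0') sc).
have us0 : uniq s0 by apply: undup_uniq.
rewrite (@csum_indep R m K x s s0 dd τ) //; last first.
  by move=> σ /cs H; rewrite mem_undup !mem_cat H.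
rewrite /csum big_split /= -mulr_sumr -!/(csum _ _ _ _).
rewrite (csum_act x s0 (apt K) τ h0h0' h0'h0).
have -> : csum x (map (act_flag h0) s0) (apt K) (act_flag h0 τ) =
          csum x (map (act_flag h0) s0) (apt K) τ.
  apply: eq_bigl => ρ; apply: asbool_equiv_eq; split => H.
    exact: sim_trans H (sim_sym (sim_h0 τ)).
  exact: sim_trans H (sim_h0 τ).
rewrite (@csum_indep R m K x (map (act_flag h0) s0) s0 (apt K) τ).
- by rewrite mulN1r addrN.
- by rewrite map_inj_uniq //; apply: (act_flag_inj h0h0').
- by [].
move=> ρ /csc H; apply/andP; split; last by rewrite mem_undup !mem_cat H orbT.
apply/mapP; exists (act_flag h0' ρ); last by rewrite (act_flagK h0'h0).
by rewrite mem_undup !mem_cat; apply/orP; right; apply/orP; right; apply: map_f.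
Qed.

Lemma apt_notW : ~ Wset x (@apt R m K).
Proof.
case=> _ /(_ (Fl R 1%g) (map (@Fl R m) (index_enum {perm 'I_N}))) H.
have : csum x (map (@Fl R m) (index_enum {perm 'I_N})) (apt K) (Fl R 1%g) = 1.
  rewrite /csum big_map (big_pred1 1%g) ?aptE /sgn ?odd_perm1 // => w.
  apply/asboolP/eqP => [/sim_Fl ->|->] //; exact: sim_refl.
have U : uniq (map (@Fl R m) (index_enum {perm 'I_N})).
  by rewrite map_inj_uniq ?index_enum_uniq //; apply: Fl_inj.
have C σ : apt K σ != 0 -> σ \in map (@Fl R m) (index_enum {perm 'I_N}).
  by move/apt_supp => [w ->]; apply: map_f; rewrite mem_index_enum.
rewrite (H U C).
by move/eqP; rewrite eq_sym oner_eq0.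
Qed.

End Main2.

Theorem mainTheorem19 (R : comNzRingType) (n : nat) (K : fieldType) :
  not_field R -> (2 <= n)%N -> ~ steinberg_irreducible R n K.
Proof.
case=> x [xnz xnu]; case: n => [|[|m]] // _ [_ Hirr].
have := Hirr (Wset x) (W_ksub m K x) (@W_inv R m K x) (@W_bdry R m K x) (fun f H => H.1).
case=> [H|H].
  have := bdry_zero (H _ (dd_W m K x)) => /(congr1 (fun f => f (Fl R 1%g))).
  by rewrite /= (dd_F1 m K xnz) => /eqP; rewrite oner_eq0.
by apply: (apt_notW xnu); apply: H; apply: apt_cycle.
Qed.
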